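(* Let $x_1,\dots,x_m$, $y_1,\dots,y_m$, $z_1,\dots,z_m$, $t_1,t_3$ be indeterminates and let $S_m$ act by permuting $x_1,\dots,x_m$ only. Then $$\sum_{w\in S_m}w\left(\frac{\prod_{j\ge2}(x_1-t_1y_j)\prod_{j\ge2}(z_1-t_3x_j)}{\prod_{j\ge2}(x_1-x_j)}\right)=(m-1)!\prod_{j\ge2}(z_1-t_1t_3y_j),$$ where all products run over $2\le j\le m$. *)

(* Defs.v *)
From HB Require Import structures.
From mathcomp Require Import all_boot all_order all_algebra all_fingroup.
Set Implicit Arguments. Unset Strict Implicit. Unset Printing Implicit Defensive.

(* Main.v *)
Require Import Defs.
From HB Require Import structures.
From mathcomp Require Import all_boot all_order all_algebra all_fingroup.
From mathcomp Require Import ring.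
Import GRing.Theory.
Local Open Scope ring_scope.

Lemma sizeL (F : fieldType) (m : nat) (x : 'I_m.+1 -> F) a :
  size (\prod_(b | b != a) ('X - (x b)%:P)) = m.+1.
Proof.
rewrite -big_filter size_prod_XsubC; congr _.+1.
have := cardC1 a; rewrite card_ord /= => H.
by rewrite -[RHS]H cardE /enum_mem.
Qed.

Lemma hornerL (F : fieldType) (m : nat) (x : 'I_m.+1 -> F) a c :
  (\prod_(b | b != a) ('X - (x b)%:P)).[x c] =
  if c == a then \prod_(b | b != a) (x a - x b) else 0.
Proof.
rewrite horner_prod; case: eqP => [->|/eqP ca].
  by apply: eq_bigr => b _; rewrite hornerXsubC.
by rewrite (bigD1 c) //= hornerXsubC subrr mul0r.
Qed.

Lemma lagrange (F : fieldType) (m : nat) (x : 'I_m.+1 -> F) (hx : injective x)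
  (f : {poly F}) (hf : (size f <= m.+1)%N) :
  \sum_a (f.[x a] / \prod_(b | b != a) (x a - x b)) *:
      \prod_(b | b != a) ('X - (x b)%:P) = f.
Proof.
set g := \sum_a _.
have den0 a : \prod_(b | b != a) (x a - x b) != 0.
  by apply/prodf_neq0 => b ba; rewrite subr_eq0 (inj_eq hx) eq_sym.
have gx c : g.[x c] = f.[x c].
  rewrite horner_sum (bigD1 c) //= hornerZ hornerL eqxx divfK //.
  rewrite [X in _ + X]big1 ?addr0 // => a ac.
  by rewrite hornerZ hornerL eq_sym (negbTE ac) mulr0.
apply/eqP; rewrite -subr_eq0; apply/negPn/negP => nz.
have := max_poly_roots nz (rs := [seq x i | i <- enum 'I_m.+1]).
rewrite map_inj_uniq ?enum_uniq // size_map size_enum_ord.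
have -> : all (root (g - f)) [seq x i | i <- enum 'I_m.+1].
  by apply/allP => _ /mapP [c _ ->]; rewrite rootE hornerD hornerN gx subrr.
move=> /(_ isT isT); apply/negP; rewrite -leqNgt.
apply: leq_trans (size_polyD _ _) _; rewrite size_polyN geq_max hf andbT.
apply: leq_trans (size_sum _ _ _) _.
apply/bigmax_leqP => a _; apply: leq_trans (size_scale_leq _ _) _.
by rewrite sizeL.
Qed.

Lemma reidx (F : fieldType) n (w : 'S_n.+1) (h : 'I_n.+1 -> F) :
  \prod_(j | j != ord0) h (w j) = \prod_(b | b != w ord0) h b.
Proof.
rewrite [RHS](reindex_inj (@perm_inj _ w)) /=.
by apply: eq_bigl => j; rewrite (inj_eq perm_inj).
Qed.

Lemma pc (F : fieldType) m (a : 'I_m.+1) (c : F) :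
  \prod_(j | j != a) c = c ^+ m.
Proof. by have := prodr_const (predC1 a) c; rewrite cardC1 card_ord. Qed.

Lemma pcM (F : fieldType) m (a : 'I_m.+1) (c : F) h :
  \prod_(j | j != a) (c * h j) = c ^+ m * \prod_(j | j != a) h j.
Proof. by rewrite big_split pc. Qed.

Lemma card0 m : #|[pred w : 'S_m.+1 | w ord0 == ord0]| = m`!.
Proof.
transitivity #|perm_on [set~ (ord0 : 'I_m.+1)]|; last first.
  by rewrite card_perm cardsC1 card_ord.
apply: eq_card => w; rewrite !inE.
apply/idP/idP => [/eqP w0|].
  apply/subsetP => i; rewrite !inE; apply: contra => /eqP ->; exact/eqP.
move=> /subsetP /(_ ord0); rewrite !inE eqxx => H.
by apply/negPn/negP => /H.
Qed.

Lemma cardA m (a : 'I_m.+1) : #|[pred w : 'S_m.+1 | w ord0 == a]| = m`!.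
Proof.
rewrite -card0 -!sum1_card (reindex_inj (mulIg (tperm ord0 a))) /=.
apply: eq_bigl => w; rewrite !inE permM -[X in _ == X](tpermL ord0 a).
by rewrite (inj_eq perm_inj).
Qed.

Theorem lemma5p7 (F : fieldType) (m : nat)
  (x y z : 'I_m.+1 -> F) (t1 t3 : F) (hx : injective x) :
  \sum_(w : 'S_m.+1)
     ((\prod_(j : 'I_m.+1 | j != ord0) (x (w ord0) - t1 * y j)) *
      (\prod_(j : 'I_m.+1 | j != ord0) (z ord0 - t3 * x (w j))) /
      (\prod_(j : 'I_m.+1 | j != ord0) (x (w ord0) - x (w j))))
  = (m`!)%:R * \prod_(j : 'I_m.+1 | j != ord0) (z ord0 - t1 * t3 * y j).
Proof.
set f := \prod_(j : 'I_m.+1 | j != ord0) ('X - (t1 * y j)%:P).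
have fx c : f.[c] = \prod_(j | j != ord0) (c - t1 * y j).
  by rewrite horner_prod; apply: eq_bigr => j _; rewrite hornerXsubC.
have sf := @sizeL F m (fun j => t1 * y j) ord0 : size f = m.+1.
pose G a := f.[x a] * \prod_(b | b != a) (z ord0 - t3 * x b) /
             \prod_(b | b != a) (x a - x b).
transitivity (\sum_(w : 'S_m.+1) G (w ord0)).
  apply: eq_bigr => w _; rewrite /G fx.
  by rewrite (@reidx F m w (fun b => z ord0 - t3 * x b))
             (@reidx F m w (fun b => x (w ord0) - x b)).
rewrite (partition_big (fun w : 'S_m.+1 => w ord0) predT) //=.
transitivity ((m`!)%:R * \sum_a G a).
  rewrite mulr_sumr; apply: eq_bigr => a _.
  rewrite (eq_bigr (fun _ => G a)); last by move=> w /eqP ->.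
  have -> : \sum_(w : 'S_m.+1 | w ord0 == a) G a = G a *+ #|[pred w : 'S_m.+1 | w ord0 == a]|.
    exact: sumr_const.
  by rewrite cardA mulr_natl.
congr (_ * _).
have lag0 := @lagrange F m x hx f (eq_leq sf).
have lag : forall v, f.[v] = \sum_a f.[x a] * (\prod_(b | b != a) ('X - (x b)%:P)).[v] /
               \prod_(b | b != a) (x a - x b).
  move=> v; rewrite -[in LHS]lag0 horner_sum; apply: eq_bigr => a _.
  by rewrite hornerZ; ring.
have [t30|t30] := eqVneq t3 0.
  have lc (a : 'I_m.+1) : (\prod_(b | b != a) ('X - (x b)%:P))`_m = 1.
    have := lead_coef_prod_XsubC (index_enum 'I_m.+1) (fun b => b != a) x.
    by rewrite /lead_coef sizeL.
  have lf : f`_m = 1.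
    have := lead_coef_prod_XsubC (index_enum 'I_m.+1) (fun b => b != ord0)
      (fun j => t1 * y j).
    by rewrite -/f /lead_coef sf.
  have s1 : \sum_a f.[x a] / \prod_(b | b != a) (x a - x b) = 1.
    rewrite -[RHS]lf -[in RHS]lag0 coef_sum; apply: eq_bigr => a _.
    by rewrite coefZ lc mulr1.
  rewrite (eq_bigr (fun j => z ord0)); last by move=> j _; rewrite t30 mulr0 mul0r subr0.
  rewrite pc -[RHS]mul1r -s1 mulr_suml; apply: eq_bigr => a _.
  rewrite /G (eq_bigr (fun j => z ord0)); last by move=> j _; rewrite t30 mul0r subr0.
  rewrite pc; ring.
have e : \prod_(j | j != ord0) (z ord0 - t1 * t3 * y j) = t3 ^+ m * f.[z ord0 / t3].
  rewrite fx -pcM; apply: eq_bigr => j _; by field.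
rewrite e lag mulr_sumr; apply: eq_bigr => a _; rewrite /G.
have -> : \prod_(b | b != a) (z ord0 - t3 * x b) =
    t3 ^+ m * (\prod_(b | b != a) ('X - (x b)%:P)).[z ord0 / t3].
  rewrite horner_prod -pcM; apply: eq_bigr => b _; rewrite hornerXsubC; by field.
ring.
Qed.
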